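(* Let $0<p<\infty$, $m\in\mathbb{N}$, and let $E_1,\dots,E_m,F$ be Banach spaces over $\mathbb{K}=\mathbb{R}$ or $\mathbb{C}$. Then $$\eta^{m\text{-}mult}_{(p,p)}(E_1,\dots,E_m;F)\le \frac mp \ \text{ if } 0<p\le 2,\qquad \eta^{m\text{-}mult}_{(p,p)}(E_1,\dots,E_m;F)\le \frac m2 \ \text{ if } p\ge 2.$$
   Context: For vectors $x_1,\dots,x_n$ in a Banach space $E$ and $q>0$, $\|(x_k)_{k=1}^n\|_{w,q}:=\sup_{\varphi\in B_{E^*}}\left(\sum_{k=1}^n|\varphi(x_k)|^q\right)^{1/q}$, where $B_{E^*}$ is the closed unit ball of the dual. $\mathcal{L}(E_1,\dots,E_m;F)$ is the space of bounded $m$-linear maps. For $p,q>0$, the multilinear $m$-index of $(p,q)$-summability $\eta^{m\text{-}mult}_{(p,q)}(E_1,\dots,E_m;F)$ is the infimum of all real numbers $s$ with the property: for every $T\in\mathcal{L}(E_1,\dots,E_m;F)$ there is a constant $C\ge0$ (depending only on $m$ and $T$) such that $$\left(\sum_{k_1,\dots,k_m=1}^n\|T(x^{(1)}_{k_1},\dots,x^{(m)}_{k_m})\|^p\right)^{1/p}\le C n^{s}\prod_{i=1}^m\|(x^{(i)}_{k})_{k=1}^n\|_{w,q}$$ for all positive integers $n$ and all $x^{(i)}_k\in E_i$, $1\le k\le n$, $1\le i\le m$. *)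

(* Defs.v *)
From HB Require Import structures.
From mathcomp Require Import all_boot all_order all_algebra.
From mathcomp Require Import all_classical all_reals all_analysis.
From mathcomp Require Import complex.
Set Implicit Arguments. Unset Strict Implicit. Unset Printing Implicit Defensive.
Import Order.TTheory GRing.Theory Num.Theory.
Import numFieldNormedType.Exports.
Local Open Scope classical_set_scope.
Local Open Scope ring_scope.

(* Scalars: K is the scalar field (R or R[i]); norms of vectors take values in K
   (they are nonnegative reals inside K); [nr : K -> R] reads such a real value
   as an element of the real field R.  It is instantiated by [id] for K = R and
   by [Re] for K = R[i]. *)

Section Defs.
Variables (R : realType) (K : numFieldType) (nr : K -> R).

Definition dual_ball (E : normedModType K) : set (E -> K) :=
  [set phi | (forall (a : K) (x y : E), phi (a *: x + y) = a * phi x + phi y)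
             /\ continuous phi
             /\ (forall x : E, nr `|phi x| <= nr `|x|)].

Definition weak_norm (E : normedModType K) (q : R) (n : nat) (x : 'I_n -> E) : R :=
  sup [set ((\sum_(k < n) (nr `|phi (x k)|) `^ q) `^ q^-1)%R
       | phi in @dual_ball E].

Definition multilinear (m : nat) (E : 'I_m -> normedModType K) (F : normedModType K)
  (T : (forall i, E i) -> F) : Prop :=
  forall (x : forall i, E i) (i : 'I_m) (a : K) (u v : E i),
    T (@dfwith _ _ x i (a *: u + v)) = a *: T (@dfwith _ _ x i u) + T (@dfwith _ _ x i v).

Definition bounded_multilinear (m : nat) (E : 'I_m -> normedModType K)
  (F : normedModType K) (T : (forall i, E i) -> F) : Prop :=
  multilinear T /\
  exists C : R, forall x : forall i, E i, nr `|T x| <= C * \prod_(i < m) nr `|x i|.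

Definition mult_index_set (p q : R) (m : nat) (E : 'I_m -> normedModType K)
  (F : normedModType K) : set R :=
  [set s | forall T : (forall i, E i) -> F, bounded_multilinear T ->
     exists C : R, 0 <= C /\
       forall (n : nat) (X : forall i : 'I_m, 'I_n -> E i), (0 < n)%N ->
         ((\sum_(k : {ffun 'I_m -> 'I_n}) (nr `|T (fun i => X i (k i))|) `^ p)
            `^ p^-1)%R
         <= C * (n%:R `^ s)%R * \prod_(i < m) @weak_norm (E i) q n (X i)].

(* multilinear m-index of (p,q)-summability (an extended real; +oo if no s works) *)
Definition eta_mult (p q : R) (m : nat) (E : 'I_m -> normedModType K)
  (F : normedModType K) : \bar R :=
  ereal_inf [set s%:E | s in @mult_index_set p q m E F].
End Defs.

(* Main.v *)
Require Import Defs.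
From HB Require Import structures.
From mathcomp Require Import all_boot all_order all_algebra.
From mathcomp Require Import all_classical all_reals all_analysis.
From mathcomp Require Import complex.
From mathcomp Require Import lra ring.
Set Implicit Arguments. Unset Strict Implicit. Unset Printing Implicit Defensive.
Import Order.TTheory GRing.Theory Num.Theory.
Import numFieldNormedType.Exports.
Import ComplexField.Normc.
Local Open Scope ring_scope.
Section HBsec.
Local Open Scope classical_set_scope.
Variables (R : realType) (V : lmodType R) (N : V -> R).
Hypotheses (Ntri : forall u v, N (u + v) <= N u + N v)
  (NZ : forall (r : R) u, N (r *: u) = `|r| * N u).
Variable x0 : V.

Definition good (G : set (V * R)) :=
 [/\ G (x0, N x0),
     (forall u a b, G (u,a) -> G (u,b) -> a = b),
     (forall r u v a b, G (u,a) -> G (v,b) -> G (r *: u + v, r * a + b))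
   & (forall u a, G (u,a) -> a <= N u)].

Lemma good0 G : good G -> G (0,0).
Proof.
case=> G0 _ Gc _; have := Gc (-1) _ _ _ _ G0 G0.
by rewrite scaleN1r mulN1r !addNr.
Qed.

Lemma goodZ G r u a : good G -> G (u,a) -> G (r *: u, r * a).
Proof.
move=> gG Gu; have := gG; case=> _ _ Gc _.
by have := Gc r _ _ _ _ Gu (good0 gG); rewrite !addr0.
Qed.

Lemma N0 : N 0 = 0.
Proof. by have := NZ 0 0; rewrite scale0r normr0 mul0r. Qed.

Lemma N_ge0 u : 0 <= N u.
Proof.
have := Ntri u (-1 *: u); rewrite [N (-1 *: u)]NZ scaleN1r addrN N0 normrN normr1 mul1r.
by move=> h; lra.
Qed.


Lemma goodB G y u v a b : good G -> G (u,a) -> G (v,b) ->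
  b - N (v - y) <= N (u + y) - a.
Proof.
move=> gG Gu Gv; have := gG; case=> _ _ Gc Gd.
have := Gd _ _ (Gc 1 _ _ _ _ Gu Gv); rewrite scale1r mul1r => h.
have e : u + v = (u + y) + (v - y) by rewrite addrACA subrr addr0.
have := Ntri (u + y) (v - y); rewrite -e => h2.
lra.
Qed.

Lemma extend G y : good G -> ~ (exists a, G (y, a)) ->
  exists G', good G' /\ G `<` G'.
Proof.
move=> gG ny; have := gG; case=> Gx0 Gf Gc Gd.
pose L := [set z | exists v b, G (v,b) /\ z = b - N (v - y)].
have L0 : L !=set0 by exists (N x0 - N (x0 - y)), x0, (N x0).
have Lub : has_ubound L.
  by exists (N (x0 + y) - N x0); move=> z [v [b [Gv ->]]]; exact: (goodB _ gG Gx0 Gv).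
pose c := sup L.
have cge v b : G (v,b) -> b - N (v - y) <= c.
  by move=> Gv; apply: ub_le_sup => //; exists v, b.
have cle u a : G (u,a) -> c <= N (u + y) - a.
  by move=> Gu; apply: ge_sup => // z [v [b [Gv ->]]]; exact: (goodB _ gG Gu Gv).
pose G' := [set z | exists u a t, G (u,a) /\ z = (u + t *: y, a + t * c)].
exists G'; split; last first.
  split.
    by move=> [u a] Gu; exists u, a, 0; rewrite scale0r mul0r !addr0.
  move=> h; apply: ny; exists c; apply: h; exists 0, 0, 1.
  by rewrite scale1r mul1r !add0r; split => //; exact: good0.
split.
- by exists x0, (N x0), 0; rewrite scale0r mul0r !addr0.
- move=> w a' b' [u [a [t [Gu [-> ->]]]]] [u2 [a2 [t2 [Gu2 []]]]] e ->.
  have [tt|tt] := eqVneq t t2.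
    subst t2; move/addIr: e => e; subst u2.
    by rewrite (Gf _ _ _ Gu Gu2).
  exfalso; apply: ny; exists ((t - t2)^-1 * (a2 - a)).
  have := Gc (-1) _ _ _ _ Gu Gu2; rewrite scaleN1r mulN1r => G2.
  have := goodZ ((t - t2)^-1) gG G2.
  have -> : - u + u2 = (t - t2) *: y.
    rewrite scalerBl; apply: (addIr (t2 *: y)).
    by rewrite -addrA -e addrA addNr add0r subrK.
  rewrite scalerA mulVf ?subr_eq0 // scale1r [- a + a2]addrC; exact.
- move=> r w1 w2 a' b' [u [a [t [Gu [-> ->]]]]] [u2 [a2 [t2 [Gu2 [-> ->]]]]].
  exists (r *: u + u2), (r * a + a2), (r * t + t2); split; first exact: Gc.
  congr pair; last by ring.
  by rewrite scalerDr scalerA addrACA -scalerDl.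
- move=> w a' [u [a [t [Gu [-> ->]]]]].
  have [t0|t0|->] := ltgtP t 0; last by rewrite scale0r mul0r !addr0; exact: Gd.
  + pose s := - t; have s0 : 0 < s by rewrite /s oppr_gt0.
    have := cge _ _ (goodZ s^-1 gG Gu).
    have -> : s^-1 *: u - y = s^-1 *: (u + t *: y).
      by rewrite scalerDr scalerA /s invrN mulNr mulVf ?lt_eqF // scaleN1r.
    rewrite NZ gtr0_norm ?invr_gt0 // => h.
    have := ler_wpM2l (ltW s0) h; rewrite mulrBr !mulrA divff ?gt_eqF // !mul1r.
    rewrite /s; lra.
  + have := cle _ _ (goodZ t^-1 gG Gu).
    have -> : t^-1 *: u + y = t^-1 *: (u + t *: y).
      by rewrite scalerDr scalerA mulVf ?gt_eqF // scale1r.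
    rewrite NZ gtr0_norm ?invr_gt0 // => h.
    have := ler_wpM2l (ltW t0) h; rewrite mulrBr !mulrA divff ?gt_eqF // !mul1r.
    lra.
Qed.

Lemma good_base : good [set z | exists t, z = (t *: x0, t * N x0)].
Proof.
split.
- by exists 1; rewrite scale1r mul1r.
- move=> u a b [t [-> ->]] [t2 [e ->]].
  have [->|x00] := eqVneq x0 0; first by rewrite N0 !mulr0.
  have : (t - t2) *: x0 = 0 by rewrite scalerBl e subrr.
  by move/eqP; rewrite scaler_eq0 (negbTE x00) orbF subr_eq0 => /eqP ->.
- move=> r u v a b [t [-> ->]] [t2 [-> ->]]; exists (r * t + t2).
  by rewrite scalerDl scalerA mulrDl mulrA.
- move=> u a [t [-> ->]]; rewrite NZ ler_wpM2r ?N_ge0 //; exact: ler_norm.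
Qed.

Lemma hahn_banach : exists f : V -> R,
  [/\ forall r u v, f (r *: u + v) = r * f u + f v,
      forall u, f u <= N u & f x0 = N x0].
Proof.
pose P := fun X : set (V * R) => X = set0 \/ good X.
have PgY Y z : P Y -> Y z -> good Y by case=> [->//|//].
have chain : forall F : set (set (V * R)), F `<=` P -> total_on F subset ->
    P (\bigcup_(X in F) X).
  move=> F FP tot.
  have [[X FX gX]|nX] := pselect (exists2 X, F X & good X); last first.
    left; apply/seteqP; split => // z [X FX Xz]; apply: nX; exists X => //.
    exact: PgY (FP _ FX) Xz.
  have two X1 X2 z1 z2 : F X1 -> F X2 -> X1 z1 -> X2 z2 ->
      exists2 Y, F Y & Y z1 /\ Y z2.
    move=> F1 F2 X1z X2z; have [h|h] := tot _ _ F1 F2.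
      by exists X2 => //; split => //; exact: h.
    by exists X1 => //; split => //; exact: h.
  right; have := gX; case=> Gx0 _ _ _; split.
  - by exists X.
  - move=> u a b [X1 F1 X1z] [X2 F2 X2z].
    have [Y FY [Y1 Y2]] := two _ _ _ _ F1 F2 X1z X2z.
    by have := PgY _ _ (FP _ FY) Y1; case=> _ Gf _ _; exact: Gf Y1 Y2.
  - move=> r u v a b [X1 F1 X1z] [X2 F2 X2z].
    have [Y FY [Y1 Y2]] := two _ _ _ _ F1 F2 X1z X2z.
    exists Y => //.
    by have := PgY _ _ (FP _ FY) Y1; case=> _ _ Gc _; exact: Gc Y1 Y2.
  - move=> u a [X1 F1 X1z].
    by have := PgY _ _ (FP _ F1) X1z; case=> _ _ _ Gd; exact: Gd.
have [A [PA maxA]] := Zorn_bigcup chain.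
have gA : good A.
  case: PA => // A0; exfalso; apply: (maxA _ _ (or_intror good_base)).
  rewrite A0; split => //; move=> h.
  by have := h (x0, N x0); rewrite /set0 /=; apply; exists 1; rewrite scale1r mul1r.
have tot y : exists a, A (y, a).
  apply: contrapT => ny.
  have [G' [gG' AG']] := extend gA ny.
  exact: (maxA _ AG' (or_intror gG')).
pose f y := projT1 (cid (tot y)).
have fP y : A (y, f y) by rewrite /f; case: cid.
have := gA; case=> Ax0 Af Ac Ad.
exists f; split.
- by move=> r u v; apply: (Af _ _ _ (fP _)); exact: Ac.
- by move=> u; exact: Ad.
- exact: Af (fP _) Ax0.
Qed.
End HBsec.

Section Realify.
Local Open Scope complex_scope.
Variables (R : realType) (E : lmodType R[i]).
Definition realify : Type := E.
HB.instance Definition _ := GRing.Zmodule.on realify.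
Definition rscale (r : R) (x : realify) : realify := (r%:C *: (x : E)).
Lemma rs1 : forall a b v, rscale a (rscale b v) = rscale (a * b) v.
Proof. by move=> a b v; rewrite /rscale scalerA -rmorphM. Qed.
Lemma rs2 : left_id 1 rscale.
Proof. by move=> v; rewrite /rscale rmorph1 scale1r. Qed.
Lemma rs3 : right_distributive rscale +%R.
Proof. by move=> a u v; rewrite /rscale scalerDr. Qed.
Lemma rs4 : forall v, {morph rscale^~ v : a b / a + b}.
Proof. by move=> v a b; rewrite /rscale rmorphD scalerDl. Qed.
HB.instance Definition _ := GRing.Zmodule_isLmodule.Build R realify rs1 rs2 rs3 rs4.
End Realify.


Section CHB.
Local Open Scope complex_scope.
Variables (R : realType) (E : lmodType R[i]) (N : E -> R).
Hypotheses (Ntri : forall u v, N (u + v) <= N u + N v)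
  (NZ : forall (c : R[i]) u, N (c *: u) = normc c * N u).

Lemma normcR (r : R) : normc r%:C = `|r|.
Proof. by rewrite /normc /= expr0n /= addr0 sqrtr_sqr. Qed.

Lemma Re_le_normc (z : R[i]) : complex.Re z <= normc z.
Proof.
case: z => a b; rewrite /normc /=; apply: le_trans (ler_norm a) _.
rewrite -sqrtr_sqr; apply: ler_wsqrtr; rewrite lerDl; exact: sqr_ge0.
Qed.

Lemma chb (x0 : E) : exists phi : E -> R[i],
  [/\ forall a u v, phi (a *: u + v) = a * phi u + phi v,
      forall u, normc (phi u) <= N u & N x0 <= normc (phi x0)].
Proof.
have NZr : forall (r : R) (u : realify E), (N : realify E -> R) (r *: u) = `|r| * N u.
  by move=> r u; rewrite -normcR; exact: NZ.
have [f [flin fN fx0]] := @hahn_banach R (realify E) N Ntri NZr x0.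
have f0 : f 0 = 0.
  by have := flin 1 0 0; rewrite scale1r addr0 mul1r => h; lra.
have fD u v : f (u + v) = f u + f v by have := flin 1 u v; rewrite scale1r mul1r.
have fR (r : R) (u : E) : f (r%:C *: u) = r * f u.
  by have := flin r u 0; rewrite addr0 f0 addr0.
have fN1 (u : E) : f (- u) = - f u.
  by have := fR (-1) u; rewrite rmorphN rmorph1 scaleN1r mulN1r.
pose phi (u : E) : R[i] := (f u) +i* (- f ('i *: u)).
have phiD u v : phi (u + v) = phi u + phi v.
  by rewrite /phi scalerDr !fD /=; congr (_ +i* _); rewrite opprD.
have phiZ a u : phi (a *: u) = a * phi u.
  case: a => ar ai.
  have -> : (ar +i* ai) *: u = ar%:C *: u + ai%:C *: ('i *: u).
    rewrite scalerA -scalerDl; congr (_ *: _).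
    by rewrite /= ; congr (_ +i* _); ring.
  have e1 : 'i *: (ar%:C *: u + ai%:C *: ('i *: u))
          = ar%:C *: ('i *: u) + ai%:C *: (- u).
    rewrite scalerDr !scalerA; congr (_ + _).
      by congr (_ *: _); rewrite mulrC.
    rewrite scalerN -scaleNr; congr (_ *: _).
    by rewrite /=; congr (_ +i* _); ring.
  rewrite /phi e1 !fD !fR fN1 /=; congr (_ +i* _); ring.
exists phi; split.
- by move=> a u v; rewrite phiD phiZ.
- move=> u; have [->|w0] := eqVneq (phi u) 0.
    by rewrite normc0; exact: (@N_ge0 R (realify E) N Ntri NZr).
  pose c := (normc (phi u))%:C / phi u.
  have nw0 : normc (phi u) != 0 by apply: contra w0 => /eqP/eq0_normc ->.
  have e : phi (c *: u) = (normc (phi u))%:C.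
    by rewrite phiZ /c mulfVK.
  have ec : normc c = 1.
    by rewrite /c normcM normcV normcR ger0_norm ?divff // /normc; case: (phi u) => ??; exact: sqrtr_ge0.
  have : complex.Re (phi (c *: u)) <= N (c *: u) by rewrite /phi /=; exact: fN.
  by rewrite e NZ ec mul1r.
- by rewrite -fx0; exact: (Re_le_normc (phi x0)).
Qed.
End CHB.

Section CplxHelp.
Local Open Scope complex_scope.
Variable R : realType.
Lemma ReN (z : R[i]) : complex.Re `|z| = normc z.
Proof. by rewrite normc_def; case: z. Qed.
Lemma normc_ge0 (z : R[i]) : 0 <= normc z.
Proof. by case: z => a b; exact: sqrtr_ge0. Qed.
Lemma ReD (a b : R[i]) : complex.Re (a + b) = complex.Re a + complex.Re b.
Proof. by case: a; case: b. Qed.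
Lemma ReMC (r : R) (z : R[i]) : complex.Re (r%:C * z) = r * complex.Re z.
Proof. by case: z => a b /=; rewrite mul0r subr0. Qed.
Lemma normC (c : R[i]) : `|c| = (normc c)%:C.
Proof. by rewrite normc_def; case: c. Qed.
Lemma le_Re (a b : R[i]) : a <= b -> complex.Re a <= complex.Re b.
Proof. by rewrite lecE => /andP[_]. Qed.
Lemma real_nneg (z : R[i]) : 0 <= z -> z = (complex.Re z)%:C.
Proof.
case: z => a b; rewrite lecE => /andP[/eqP hb _] /=; congr (_ +i* _).
by move: hb => /= ->.
Qed.
Lemma leC (a b : R) : (a%:C <= b%:C :> R[i]) = (a <= b).
Proof. by rewrite lecE /= eqxx. Qed.
End CplxHelp.

Lemma lin_sub (K : numFieldType) (V : lmodType K) (phi : V -> K) :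
  (forall a u v, phi (a *: u + v) = a * phi u + phi v) ->
  forall x y, phi (x - y) = phi x - phi y.
Proof.
move=> lin x y; have := lin (-1) y x; rewrite scaleN1r mulN1r addrC => ->.
by rewrite addrC.
Qed.
Lemma lip_cont (K : numFieldType) (E : normedModType K) (phi : E -> K) :
  (forall x y, phi (x - y) = phi x - phi y) -> (forall x, `|phi x| <= `|x|) ->
  continuous phi.
Proof.
move=> phiB phiN x; apply/(@cvgrPdist_lt K K^o) => e e0; apply/nbhs_normP.
exists e => //= y; rewrite -phiB; exact/le_lt_trans.
Qed.
Section Main.
Local Open Scope classical_set_scope.
Variables (R : realType) (K : numFieldType) (nr : K -> R).
Hypothesis nr_ge0 : forall z : K, 0 <= nr `|z|.
Variables (p : R) (hp : 0 < p).

Lemma powRpK (a : R) : 0 <= a -> (a `^ p) `^ p^-1 = a.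
Proof. by move=> a0; rewrite -powRrM divff ?gt_eqF // powRr1. Qed.

Lemma powR_le (r a b : R) : 0 <= r -> 0 <= a -> a <= b -> a `^ r <= b `^ r.
Proof.
move=> r0 a0 ab; apply: ge0_ler_powR => //; rewrite nnegrE //; exact: le_trans ab.
Qed.

Lemma weak_norm_ge (E : normedModType K) n (X : 'I_n -> E) (k : 'I_n) :
  (exists2 phi, dual_ball nr phi & nr `|X k| <= nr `|phi (X k)|) ->
  nr `|X k| <= weak_norm nr p X.
Proof.
move=> [phi phiB hk].
have pi0 : 0 <= p^-1 by rewrite invr_ge0 ltW.
have ub : has_ubound [set ((\sum_(j < n) (nr `|psi (X j)|) `^ p) `^ p^-1)%R
       | psi in @dual_ball R K nr E].
  exists ((\sum_(j < n) (nr `|X j|) `^ p) `^ p^-1); move=> z [psi [_ [_ psiB]] <-].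
  apply: powR_le => //; first by apply: sumr_ge0 => *; exact: powR_ge0.
  by apply: ler_sum => j _; apply: powR_le; [exact: ltW | exact: nr_ge0 | exact: psiB].
apply: (le_trans hk); rewrite /weak_norm.
have Sphi : [set ((\sum_(j < n) (nr `|psi (X j)|) `^ p) `^ p^-1)%R
       | psi in @dual_ball R K nr E] ((\sum_(j < n) (nr `|phi (X j)|) `^ p) `^ p^-1) by exists phi.
have := ub_le_sup ub Sphi => /= h; apply: le_trans h.
rewrite -{1}(powRpK (nr_ge0 (phi (X k)))).
apply: powR_le => //; first exact: powR_ge0.
rewrite (bigD1 k) //= lerDl sumr_ge0 // => *; exact: powR_ge0.
Qed.


Lemma nrv_ge0 (E : normedModType K) (x : E) : 0 <= nr `|x|.
Proof. by rewrite -normr_id; exact: nr_ge0. Qed.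

Lemma index_mem (m : nat) (E : 'I_m -> normedModType K) (F : normedModType K) :
  (forall i (x : E i), exists2 phi, dual_ball nr phi & nr `|x| <= nr `|phi x|) ->
  mult_index_set nr p p E F (m%:R / p).
Proof.
move=> norming T [Tml [C0 hC0]].
exists `|C0|; split => // n X n0.
pose w i := weak_norm nr p (X i).
have wge i (k : 'I_n) : nr `|X i k| <= w i by apply: weak_norm_ge; exact: norming.
have w0 i : 0 <= w i.
  have := wge i (Ordinal n0); have := nrv_ge0 (X i (Ordinal n0)); lra.
pose W := \prod_(i < m) w i.
have W0 : 0 <= W by apply: prodr_ge0.
have CW0 : 0 <= `|C0| * W by rewrite mulr_ge0.
have term (k : {ffun 'I_m -> 'I_n}) :
    (nr `|T (fun i => X i (k i))|) `^ p <= (`|C0| * W) `^ p.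
  apply: powR_le; [exact: ltW | exact: nrv_ge0 |].
  apply: le_trans (hC0 _) _.
  have P0 : 0 <= \prod_(i < m) nr `|X i (k i)| by apply: prodr_ge0 => *; exact: nrv_ge0.
  apply: le_trans (ler_wpM2r P0 (ler_norm C0)) _.
  apply: ler_wpM2l; first exact: normr_ge0.
  apply: ler_prod => i _; rewrite nrv_ge0; exact: wge.
apply: le_trans (powR_le _ _ (ler_sum _ (fun k _ => term k))) _.
- by rewrite invr_ge0 ltW.
- by apply: sumr_ge0 => *; exact: powR_ge0.
rewrite sumr_const card_ffun !card_ord -[(_ *+ (n ^ m)%N)]mulr_natl natrX.
rewrite powRM ?exprn_ge0 ?powR_ge0 // powRpK //.
rewrite -powR_mulrn // -powRrM.
rewrite [X in X <= _](_ : _ = `|C0| * n%:R `^ (m%:R / p) * \prod_(i < m) weak_norm nr p (X i)) //.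
by rewrite /W /w; ring.
Qed.
End Main.

Unset Implicit Arguments.

Theorem mainTheorem2 (R : realType) (p : R) (hp : 0 < p) (m : nat) :
  (* K = R *)
  (forall (E : 'I_m -> completeNormedModType R) (F : completeNormedModType R),
     ((p <= 2) -> (eta_mult (@id R) p p (fun i => E i : normedModType R) F
                   <= (m%:R / p)%:E)%E) /\
     ((2 <= p) -> (eta_mult (@id R) p p (fun i => E i : normedModType R) F
                   <= (m%:R / 2)%:E)%E)) /\
  (* K = C = R[i] *)
  (forall (E : 'I_m -> completeNormedModType R[i]) (F : completeNormedModType R[i]),
     ((p <= 2) -> (eta_mult (@complex.Re R) p p (fun i => E i : normedModType R[i]) F
                   <= (m%:R / p)%:E)%E) /\
     ((2 <= p) -> (eta_mult (@complex.Re R) p p (fun i => E i : normedModType R[i]) F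
                   <= (m%:R / 2)%:E)%E)).
Proof.
have fin (K : numFieldType) (nr : K -> R) (E : 'I_m -> normedModType K)
    (F : normedModType K) (nr0 : forall z : K, 0 <= nr `|z|)
    (norming : forall i (x : E i),
       exists2 phi, dual_ball nr phi & nr `|x| <= nr `|phi x|) :
    ((p <= 2) -> (eta_mult nr p p E F <= (m%:R / p)%:E)%E) /\
    ((2 <= p) -> (eta_mult nr p p E F <= (m%:R / 2)%:E)%E).
  have h : (eta_mult nr p p E F <= (m%:R / p)%:E)%E.
    apply: ereal_inf_lbound; exists (m%:R / p) => //; exact: index_mem.
  split => // p2; apply: le_trans h _; rewrite lee_fin; apply: ler_wpM2l => //.
  by rewrite lef_pV2 // posrE.
split.
- move=> E F; apply: fin; first by move=> z; exact: normr_ge0.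
  move=> i x.
  have [f [flin fN fx]] := @hahn_banach R (E i) (fun y => `|y|)
    (fun u v => ler_normD u v) (fun r u => normrZ r u) x.
  have fB := lin_sub flin.
  have f0 : f 0 = 0 by have := fB 0 0; rewrite subrr => h; lra.
  have fabs u : `|f u| <= `|u|.
    rewrite ler_norml fN andbT; have := fN (- u); rewrite normrN.
    by have := fB 0 u; rewrite sub0r f0 sub0r => ->; lra.
  exists f; last by rewrite /= fx normr_id.
  split; first exact: flin.
  by split; [exact: lip_cont | exact: fabs].
- move=> E F; apply: fin.
    by move=> z; rewrite ReN; exact: normc_ge0.
  move=> i x.
  have Ntri (u v : E i) : complex.Re `|u + v| <= complex.Re `|u| + complex.Re `|v|.
    by rewrite -ReD; apply: le_Re; exact: ler_normD.
  have NZ (c : R[i]) (u : E i) : complex.Re `|c *: u| = normc c * complex.Re `|u|.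
    by rewrite normrZ normC ReMC.
  have [phi [plin pN px]] := @chb R (E i) (fun y => complex.Re `|y|) Ntri NZ x.
  have pB := lin_sub plin.
  exists phi; last by rewrite (ReN (phi x)).
  split; first exact: plin.
  split; last by move=> y; rewrite ReN; exact: pN.
  apply: lip_cont => // y.
  by rewrite normC (real_nneg (normr_ge0 y)) leC; exact: pN.
Qed.
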